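(* Let $u,v$ be variables and $a<b$ integers. Then $$\sum_{a<i<b}\frac{(qv)^{1/2-i}}{(q^au)_{i-a}\,(q^iuv)_{b-i}}=\frac{1}{1-qv}\left(\frac{(qv)^{3/2-b}}{(q^au)_{b-a-1}}-\frac{(qv)^{1/2-a}}{(q^{a+1}uv)_{b-a-1}}\right).$$ Moreover, $$\sum_{1\le i<b}\frac{(qv)^{1/2-i}}{(q)_{i-1}\,(q^iv)_{b-i}}=\frac{1}{1-qv}\,\frac{(qv)^{3/2-b}}{(q)_{b-2}}.$$
   Context: $(x)_n:=\prod_{j=0}^{n-1}(1-xq^j)$ for $n\ge0$. Identities of rational functions (with a fixed choice of $(qv)^{1/2}$ and integer powers thereof). *)

(* Defs.v *)
From mathcomp Require Import all_boot all_order all_algebra.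
Set Implicit Arguments. Unset Strict Implicit. Unset Printing Implicit Defensive.
Import Order.TTheory GRing.Theory Num.Theory.
Local Open Scope ring_scope.

Definition qpoch (K : fieldType) (q x : K) (n : nat) : K :=
  \prod_(j < n) (1 - x * q ^+ j).

Definition open_int_range (a b : int) : seq int :=
  [seq a + (k.+1)%:Z | k <- iota 0 (absz (b - a - 1)%R)].

(* Main.v *)
Require Import Defs.
From mathcomp Require Import all_boot all_order all_algebra.
From mathcomp Require Import zify ring.
Import Order.TTheory GRing.Theory Num.Theory.
Local Open Scope ring_scope.

Lemma qpochS (K : fieldType) (q x : K) n :
  qpoch q x n.+1 = qpoch q x n * (1 - x * q ^+ n).
Proof. by rewrite /qpoch big_ord_recr. Qed.

Lemma qpochSl (K : fieldType) (q x : K) n :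
  qpoch q x n.+1 = (1 - x) * qpoch q (x * q) n.
Proof.
rewrite /qpoch big_ord_recl expr0 mulr1; congr (_ * _).
by apply: eq_bigr => i _; rewrite exprS mulrA.
Qed.

Lemma qpoch_neq0 (K : fieldType) (q x : K) n :
  (forall j : nat, 1 - x * q ^+ j != 0) -> qpoch q x n != 0.
Proof. by move=> H; apply/prodf_neq0 => i _; apply: H. Qed.

Lemma core1 (K : fieldType) (q x w : K) (n : nat) :
  w != 0 -> 1 - w != 0 -> (forall j : nat, 1 - x * q ^+ j != 0) ->
  (forall j : nat, 1 - x * w * q ^+ j != 0) ->
  \sum_(0 <= k < n) (w ^+ k.+1)^-1 / (qpoch q x k.+1 * qpoch q (x * w * q ^+ k) (n - k))
  = (1 - w)^-1 * ((w ^+ n)^-1 / qpoch q x n - 1 / qpoch q (x * w) n).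
Proof.
move=> w0 w1 hx hxw.
pose g k := (1 - w)^-1 * ((w ^+ k)^-1 / (qpoch q x k * qpoch q (x * w * q ^+ k) (n - k))).
rewrite (telescope_sumr_eq g) //; last first.
  move=> k /andP[_ kn]; rewrite /g.
  have -> : (n - k = (n - k.+1).+1)%N by rewrite subnSK.
  rewrite qpochS qpochSl.
  have -> : x * w * q ^+ k * q = x * w * q ^+ k.+1 by rewrite exprSr mulrA.
  have hA' := @qpoch_neq0 _ q x k hx.
  have hB : qpoch q (x * w * q ^+ k.+1) (n - k.+1) != 0.
    by apply: qpoch_neq0 => j; rewrite -mulrA -exprD; apply: hxw.
  have ha := hx k. have hb := hxw k.
  rewrite exprS.
  move: (w ^+ k) (expf_neq0 k w0) => W W0.
  move: (qpoch q x k) hA' => A A0.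
  move: (qpoch q (x * w * q ^+ k.+1) (n - k.+1)) hB => B B0.
  field.
  by rewrite W0 A0 B0 ha hb w0 w1.
rewrite /g subnn subn0 expr0 mulr1 {2}/qpoch big_ord0 mulr1.
rewrite [qpoch q x 0]/qpoch big_ord0 invr1 mul1r mulrBr.
by rewrite mul1r mul1r.
Qed.
Lemma spow (K : fieldType) (s : K) (z : int) (n : nat) : s != 0 ->
  s ^ (z - 2 * n%:Z) = s ^ z * ((s ^+ 2) ^+ n)^-1.
Proof.
move=> s0; have -> : z - 2 * n%:Z = z + - ((2 * n)%N : int) by lia.
by rewrite expfzDr // -exprnN exprM.
Qed.
Lemma qpow (K : fieldType) (q : K) (a : int) (n : nat) : q != 0 ->
  q ^ (a + n%:Z) = q ^ a * q ^+ n.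
Proof. by move=> q0; rewrite expfzDr. Qed.

Theorem lemma8p4 (K : fieldType) (q u v s : K) (a b : int) :
  q != 0 -> v != 0 -> s ^+ 2 = q * v ->
  (* genericity: the parameters behave like independent variables *)
  (forall j : int, j != 0 -> q ^ j != 1) ->
  (forall j : int, 1 - q ^ j * u != 0) ->
  (forall j : int, 1 - q ^ j * v != 0) ->
  (forall j : int, 1 - q ^ j * u * v != 0) ->
  a < b ->
  (\sum_(i <- open_int_range a b)
      s ^ (1 - 2 * i) / (qpoch q (q ^ a * u) (absz (i - a)%R) * qpoch q (q ^ i * u * v) (absz (b - i)%R))
   = (1 - q * v)^-1 *
     (s ^ (3 - 2 * b) / qpoch q (q ^ a * u) (absz (b - a - 1)%R)
      - s ^ (1 - 2 * a) / qpoch q (q ^ (a + 1) * u * v) (absz (b - a - 1)%R)))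
  /\
  (2 <= b ->
   \sum_(i <- open_int_range 0 b)
      s ^ (1 - 2 * i) / (qpoch q q (absz (i - 1)%R) * qpoch q (q ^ i * v) (absz (b - i)%R))
   = (1 - q * v)^-1 * (s ^ (3 - 2 * b) / qpoch q q (absz (b - 2)%R))).
Proof.
move=> q0 v0 s2 hq hu hv huv ab.
have s0 : s != 0.
  by apply/eqP => s0; move: s2; rewrite s0 expr0n /= => /esym/eqP; rewrite mulf_eq0 (negPf q0) (negPf v0).
have w0 : q * v != 0 by rewrite mulf_neq0.
have w1 : 1 - q * v != 0 by have := hv 1; rewrite expr1z.
split.
- have [N ->] : exists N : nat, b = a + N.+1%:Z.
    by exists (absz (b - a - 1)%R); lia.
  rewrite /open_int_range.
  have -> : absz (a + N.+1%:Z - a - 1)%R = N by lia.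
  rewrite big_map.
  pose x := q ^ a * u.
  have hx : forall j : nat, 1 - x * q ^+ j != 0.
    by move=> j; rewrite /x mulrAC -qpow.
  have hxw : forall j : nat, 1 - x * (q * v) * q ^+ j != 0.
    move=> j; have := huv (a + j.+1%:Z); rewrite qpow // exprS /x.
    by congr (_ != _); ring.
  have := @core1 K q x (q * v) N w0 w1 hx hxw.
  rewrite -s2 => C.
  transitivity (s ^ (1 - 2 * a) * \sum_(0 <= k < N)
     ((s ^+ 2) ^+ k.+1)^-1 / (qpoch q x k.+1 * qpoch q (x * s ^+ 2 * q ^+ k) (N - k))).
    rewrite mulr_sumr /index_iota subn0; apply: eq_big_seq => k.
    rewrite mem_iota add0n => /andP[_ kN].
    have -> : absz (a + k.+1%:Z - a)%R = k.+1 by lia.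
    have -> : absz (a + N.+1%:Z - (a + k.+1%:Z))%R = (N - k)%N by lia.
    have -> : 1 - 2 * (a + k.+1%:Z) = (1 - 2 * a) - 2 * k.+1%:Z by ring.
    rewrite spow // qpow // s2 /x mulrA.
    congr (_ / (_ * qpoch q _ _)); rewrite exprS; ring.
  rewrite C.
  have -> : 3 - 2 * (a + N.+1%:Z) = (1 - 2 * a) - 2 * N%:Z by ring.
  rewrite spow // qpow // expr1 s2 /x.
  have -> : q ^ a * q * u * v = q ^ a * u * (q * v) by ring.
  ring.
- move=> b2.
  have [m ->] : exists m : nat, b = m.+2%:Z by exists (absz (b - 2)%R); lia.
  rewrite /open_int_range.
  have -> : absz (m.+2%:Z - 0 - 1)%R = m.+1 by lia.
  rewrite big_map.
  have -> : absz (m.+2%:Z - 2)%R = m by lia.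
  have hx : forall j : nat, 1 - q * q ^+ j != 0.
    move=> j; have := hq (j.+1%:Z) isT.
    by rewrite subr_eq0 eq_sym -exprS.
  have hxw : forall j : nat, 1 - q * (q * v) * q ^+ j != 0.
    move=> j; have := hv (j.+2%:Z).
    have -> : q ^ (j.+2%:Z) = q ^+ j.+2 by [].
    by congr (_ != _); rewrite !exprS; ring.
  have C := @core1 K q q (q * v) m w0 w1 hx hxw.
  transitivity (s ^ (-1) * \sum_(0 <= k < m.+1)
     ((q * v) ^+ k)^-1 / (qpoch q q k * qpoch q (q * v * q ^+ k) (m.+1 - k))).
    rewrite mulr_sumr /index_iota subn0; apply: eq_big_seq => k.
    rewrite mem_iota add0n => /andP[_ km].
    have -> : absz (0 + k.+1%:Z - 1)%R = k by lia.
    have -> : absz (m.+2%:Z - (0 + k.+1%:Z))%R = (m.+1 - k)%N by lia.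
    have -> : 1 - 2 * (0 + k.+1%:Z) = (-1) - 2 * k%:Z by lia.
    rewrite spow // s2 add0r.
    have -> : q ^ (k.+1%:Z) = q ^+ k.+1 by [].
    rewrite mulrA; congr (_ / (_ * qpoch q _ _)); rewrite exprS; ring.
  rewrite big_nat_recl //.
  have -> : \sum_(0 <= i < m) ((q * v) ^+ i.+1)^-1 /
      (qpoch q q i.+1 * qpoch q (q * v * q ^+ i.+1) (m.+1 - i.+1))
    = \sum_(0 <= i < m) ((q * v) ^+ i.+1)^-1 /
      (qpoch q q i.+1 * qpoch q (q * (q * v) * q ^+ i) (m - i)).
    apply: eq_bigr => i _; rewrite subSS; congr (_ / (_ * qpoch q _ _)).
    by rewrite exprS; ring.
  rewrite C expr0 invr1 subn0 qpochSl.
  have -> : q * v * q ^+ 0 * q = q * (q * v) by rewrite expr0; ring.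
  have -> : 3 - 2 * m.+2%:Z = (-1) - 2 * m%:Z by lia.
  rewrite spow // s2.
  have A0 := @qpoch_neq0 K q q m hx.
  have B0 : qpoch q (q * (q * v)) m != 0.
    by apply: qpoch_neq0 => j; have := hxw j; rewrite mulrA.
  have W0 := expf_neq0 m w0.
  rewrite /qpoch big_ord0 -/(qpoch q q m) -/(qpoch q (q * (q * v)) m) expr0 mulr1.
  move: (qpoch q q m) A0 (qpoch q (q * (q * v)) m) B0 ((q * v) ^+ m) W0 => A A0 B B0 W W0.
  move: (s ^ (-1)) => S; field.
  by rewrite A0 B0 W0 w1.
Qed.
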